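(* Let $n\geq 10$ be an integer and let $C_n$ be a set of $n$ points in the plane in general and convex position. Then $\mu(D(C_n))=\binom{n}{2}-5$.
   Context: A set of points in the plane is in general position if no three of its points are collinear, and in convex position if every point is a vertex of its convex hull. The disjointness graph of segments $D(P)$ is the graph whose vertices are all closed straight-line segments with both endpoints in $P$, two being adjacent if and only if they are disjoint. For a graph $G$ and $U\subseteq V(G)$, two distinct vertices $x,y\in U$ are $U$-mutually visible if $G$ contains a shortest $x$-$y$ path none of whose internal vertices lies in $U$; $U$ is a mutual-visibility set if every two distinct vertices of $U$ are $U$-mutually visible. The mutual-visibility number $\mu(G)$ is the maximum size of a mutual-visibility set of $G$. *)

(* Defs.v *)
From HB Require Import structures.
From mathcomp Require Import all_boot all_order all_algebra.
From mathcomp Require Import boolp reals.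
Set Implicit Arguments. Unset Strict Implicit. Unset Printing Implicit Defensive.
Import Order.TTheory GRing.Theory Num.Theory.
Local Open Scope ring_scope.

Section Geometry.
Variable R : realType.
Definition point := (R * R)%type.

Definition orient (a b c : point) : R :=
  (b.1 - a.1) * (c.2 - a.2) - (b.2 - a.2) * (c.1 - a.1).

Variable n : nat.
Variable p : 'I_n -> point.

Definition general_position : Prop :=
  forall i j k : 'I_n, i != j -> j != k -> i != k -> orient (p i) (p j) (p k) != 0.

Definition in_hull_of_others (i : 'I_n) (x : point) : Prop :=
  exists w : 'I_n -> R,
    [/\ forall j, 0 <= w j, w i = 0, \sum_j w j = 1,
        x.1 = \sum_j w j * (p j).1 & x.2 = \sum_j w j * (p j).2].

Definition convex_position : Prop :=
  forall i : 'I_n, ~ in_hull_of_others i (p i).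

(* segments with both endpoints in P: 2-element sets of indices *)
Definition segment := {s : {set 'I_n} | #|s| == 2%N}.

Definition on_segment (s : segment) (x : point) : Prop :=
  exists i j t, [/\ i \in val s, j \in val s, 0 <= t <= 1,
    x.1 = (1 - t) * (p i).1 + t * (p j).1 &
    x.2 = (1 - t) * (p i).2 + t * (p j).2].

Definition disj_adj : rel segment :=
  fun s s' => `[< ~ exists x, on_segment s x /\ on_segment s' x >].
End Geometry.

Section Visibility.
Variables (T : finType) (e : rel T).

(* x :: s is a walk from x to y *)
Definition walk (x y : T) (s : seq T) := path e x s && (last x s == y).

(* s is a shortest x-y walk (its length is size s) *)
Definition shortest_path (x y : T) (s : seq T) : Prop :=
  walk x y s /\ forall s', walk x y s' -> (size s <= size s')%N.

(* internal vertices of the walk x :: s *)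
Definition internal (x : T) (s : seq T) := behead (belast x s).

Definition mutually_visible (U : {set T}) (x y : T) : Prop :=
  exists s, shortest_path x y s /\ all (fun v => v \notin U) (internal x s).

Definition mv_set (U : {set T}) : Prop :=
  forall x y, x \in U -> y \in U -> x != y -> mutually_visible U x y.

Definition mu : nat := \max_(U : {set T} | `[< mv_set U >]) #|U|.
End Visibility.

(* Main.v *)
Require Import Defs.
From HB Require Import structures.
From mathcomp Require Import all_boot all_order all_algebra.
From mathcomp Require Import boolp reals.
From mathcomp Require Import ring lra zify.
From Stdlib Require Import FunctionalExtensionality.
Set Implicit Arguments. Unset Strict Implicit. Unset Printing Implicit Defensive.
Import Order.TTheory GRing.Theory Num.Theory.

Fixpoint hasL {T} (a : T -> bool) (s : seq T) : bool :=
  if s is x :: s' then (if a x then true else hasL a s') else false.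
Fixpoint allL {T} (a : T -> bool) (s : seq T) : bool :=
  if s is x :: s' then (if a x then allL a s' else false) else true.

Section Check.
Variable E : nat -> nat -> bool.
Definition inWi (s t i : nat) := if (if E s (2*i) then E t (2*i+1) else false) then true else if E s (2*i+1) then E t (2*i) else false.
Definition inW (s t : nat) := hasL (inWi s t) (iota 0 4).
Definition covi (S : seq nat) i := hasL (fun s => if E s (2*i) then true else E s (2*i+1)) S.
Definition cov (S : seq nat) := allL (covi S) (iota 0 4).
Definition nE a b := if E a b then false else true.
Definition vA (d u v : nat) :=
  if nE d u then if nE d v then if nE u v then if inW d u then false else if inW d v then false else
  cov [:: d; u; v] else false else false else false.
Definition vB (a b c d : nat) :=
  if allL (fun x => x) [:: nE a b; nE a c; nE a d; nE b c; nE b d; nE c d] then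
  if hasL (fun x => x) [:: inW a b; inW a c; inW a d; inW b c; inW b d; inW c d] then false else
  cov [:: a; b; c; d] else false.
Definition I10 := iota 0 10.
Fixpoint undupE (s : seq nat) : seq nat :=
  if s is x :: s' then x :: filter (fun y => nE x y) (undupE s') else [::].
Definition candB (h0 h1 h2 h3 : nat) := take 4 (undupE [:: h0; 2 + h1; 4 + h2; 6 + h3; 8; 9]).
Definition testB (q : seq nat) := vB (nth 0 q 0) (nth 0 q 1) (nth 0 q 2) (nth 0 q 3).
Definition checkB := hasL (fun h0 => hasL (fun h1 => hasL (fun h2 => hasL (fun h3 =>
   testB (candB h0 h1 h2 h3)) (iota 0 2)) (iota 0 2)) (iota 0 2)) (iota 0 2).
Definition checkA := hasL (fun d => hasL (fun u => hasL (fun v => vA d u v) I10) I10) I10.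
Definition check := if checkB then true else checkA.
End Check.

Definition Er (r : seq nat) := let R := r ++ [:: 8; 9] in fun k l => nth 8 R k == nth 8 R l.
Definition cons_ok (r : seq nat) := allL (fun i => nth 0 r (2*i) != nth 0 r (2*i+1)) (iota 0 4).

Lemma fin_check :
  allL (fun r0 => allL (fun r1 => allL (fun r2 => allL (fun r3 => allL (fun r4 =>
  allL (fun r5 => allL (fun r6 => allL (fun r7 =>
    let r := [:: r0; r1; r2; r3; r4; r5; r6; r7] in if cons_ok r then check (Er r) else true)
  (iota 0 8)) (iota 0 7)) (iota 0 6)) (iota 0 5)) (iota 0 4)) (iota 0 3)) (iota 0 2)) (iota 0 1).
Proof. vm_compute. reflexivity. Qed.

Lemma allLP {T : eqType} (a : T -> bool) s : allL a s -> forall x, x \in s -> a x.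
Proof.
elim: s => //= y s IH; case: ifP => // hy hs x; rewrite in_cons => /orP [/eqP ->//|]; exact: IH.
Qed.

Lemma hasLP {T} (a : T -> bool) s : hasL a s -> exists x, a x.
Proof. elim: s => //= y s IH; case: ifP => [hy _|_ /IH //]; by exists y. Qed.

Lemma check_pt (T : eqType) (pt : nat -> T) :
  (forall k, 10 <= k -> pt k = pt 8) ->
  (forall i, i < 4 -> pt (2 * i) != pt (2 * i + 1)) ->
  (forall k, k < 8 -> pt k != pt 8) -> (forall k, k < 9 -> pt k != pt 9) ->
  check (fun k l => pt k == pt l).
Proof.
move=> hbig hab h8 h9.
pose P k := fun j => pt j == pt k.
pose rho k := find (P k) (iota 0 10).
have hasP : forall k, has (P k) (iota 0 10).
  move=> k; apply/hasP; case: (ltnP k 10) => hk.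
    by exists k; rewrite ?mem_iota ?add0n /P //.
  by exists 8; rewrite ?mem_iota /P ?hbig.
have rho_lt : forall k, rho k < 10.
  by move=> k; have := hasP k; rewrite has_find size_iota.
have rho_pt : forall k, pt (rho k) = pt k.
  move=> k; have := nth_find 0 (hasP k); rewrite nth_iota ?add0n ?rho_lt //.
  by move/eqP.
have rho_le : forall k, k < 10 -> rho k <= k.
  move=> k hk; rewrite leqNgt; apply/negP => /(before_find 0).
  by rewrite nth_iota // add0n /P eqxx.
have rhoE : forall k l, (pt k == pt l) = (rho k == rho l).
  move=> k l; apply/eqP/eqP => e.
    by rewrite /rho /P e.
  by rewrite -rho_pt e rho_pt.
have r8 : rho 8 = 8.
  apply/eqP; rewrite eqn_leq rho_le // leqNgt; apply/negP => h.
  by have := h8 _ h; rewrite -(rho_pt 8) eqxx.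
have r9 : rho 9 = 9.
  apply/eqP; rewrite eqn_leq rho_le // leqNgt; apply/negP => h.
  by have := h9 _ h; rewrite -(rho_pt 9) eqxx.
pose r := [:: rho 0; rho 1; rho 2; rho 3; rho 4; rho 5; rho 6; rho 7].
have Eeq : (fun k l => pt k == pt l) = Er r.
  apply: functional_extensionality => k; apply: functional_extensionality => l; rewrite rhoE /Er.
  have nthr : forall m, rho m = nth 8 (r ++ [:: 8; 9]) m.
    move=> m; case: (ltnP m 10) => hm.
      by do 10! (case: m hm => [|m] hm //=).
    rewrite nth_default; last by rewrite size_cat /=.
    by rewrite -r8 /rho /P hbig.
  by rewrite !nthr.
rewrite Eeq.
have := fin_check.
move=> /allLP /(_ (rho 0)); rewrite mem_iota add0n (leq_ltn_trans (rho_le 0 _)) // => /(_ isT).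
move=> /allLP /(_ (rho 1)); rewrite mem_iota add0n ltnS rho_le // => /(_ isT).
move=> /allLP /(_ (rho 2)); rewrite mem_iota add0n ltnS rho_le // => /(_ isT).
move=> /allLP /(_ (rho 3)); rewrite mem_iota add0n ltnS rho_le // => /(_ isT).
move=> /allLP /(_ (rho 4)); rewrite mem_iota add0n ltnS rho_le // => /(_ isT).
move=> /allLP /(_ (rho 5)); rewrite mem_iota add0n ltnS rho_le // => /(_ isT).
move=> /allLP /(_ (rho 6)); rewrite mem_iota add0n ltnS rho_le // => /(_ isT).
move=> /allLP /(_ (rho 7)); rewrite mem_iota add0n ltnS rho_le // => /(_ isT).
rewrite /= -/r.
have -> : cons_ok r.
  rewrite /cons_ok /= -!rhoE.
  by rewrite (hab 0) // (hab 1) // (hab 2) // (hab 3).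
done.
Qed.

Local Open Scope ring_scope.

Definition opp (R : realType) (a b : R) := (0 < a /\ b < 0) \/ (a < 0 /\ 0 < b).

Ltac pick := match goal with
  | |- opp _ _ => unfold opp; pick
  | |- _ \/ _ => first [left; pick | right; pick]
  | |- _ /\ _ => split; pick
  | |- _ => lra end.

Lemma signs4 (R : realType) (x1 x2 x3 x4 : R) :
  x1 != 0 -> x2 != 0 -> x3 != 0 -> x4 != 0 -> x1 - x2 + x3 - x4 = 0 ->
  (opp x1 x2 /\ opp x3 x4) \/ (opp (- x1) x3 /\ opp x2 (- x4)) \/ (opp (- x2) (- x3) /\ opp x1 x4) \/
  (0 < x2 /\ 0 < x4 /\ 0 < - x3) \/ (x2 < 0 /\ x4 < 0 /\ - x3 < 0) \/
  (0 < x1 /\ 0 < - x4 /\ 0 < x3) \/ (x1 < 0 /\ - x4 < 0 /\ x3 < 0) \/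
  (0 < - x1 /\ 0 < x4 /\ 0 < x2) \/ (- x1 < 0 /\ x4 < 0 /\ x2 < 0) \/
  (0 < x1 /\ 0 < x3 /\ 0 < - x2) \/ (x1 < 0 /\ x3 < 0 /\ - x2 < 0).
Proof.
rewrite !neq_lt => /orP [h1|h1] /orP [h2|h2] /orP [h3|h3] /orP [h4|h4] e;
  first [solve [lra] | pick].
Qed.

Lemma opp_mul (R : realType) (a b : R) : opp a b -> a * b < 0.
Proof. by case=> [[ha hb]|[ha hb]]; [rewrite pmulr_rlt0 | rewrite nmulr_rlt0]. Qed.

Section Geo.
Variable R : realType.
Implicit Types a b c d x : point R.

Lemma orient_cyc a b c : orient a b c = orient b c a.
Proof. rewrite /orient; ring. Qed.
Lemma orient_swap a b c : orient a b c = - orient b a c.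
Proof. rewrite /orient; ring. Qed.

Lemma ratio01 (g d : R) : g * d < 0 -> 0 <= g / (g - d) <= 1.
Proof.
move=> h.
have [hg|hg] := ltrP 0 g.
  have hd : d < 0 by nra.
  have hgd : 0 < g - d by lra.
  apply/andP; split; first by apply: divr_ge0; lra.
  by rewrite ler_pdivrMr // mul1r; lra.
have hg' : g < 0.
  move: hg; rewrite le_eqVlt => /orP [/eqP e|//]; by move: h; rewrite e mul0r ltxx.
have hd : 0 < d by nra.
have hgd : g - d < 0 by lra.
apply/andP; split; first by rewrite -mulrNN -invrN; apply: divr_ge0; lra.
by rewrite ler_ndivrMr // mul1r; lra.
Qed.

Lemma cross_pt (P Q A B : point R) :
  orient P Q A * orient P Q B < 0 -> orient A B P * orient A B Q < 0 ->
  exists t s, [/\ 0 <= t <= 1, 0 <= s <= 1,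
    (1 - t) * P.1 + t * Q.1 = (1 - s) * A.1 + s * B.1 &
    (1 - t) * P.2 + t * Q.2 = (1 - s) * A.2 + s * B.2].
Proof.
move=> h1 h2.
exists (orient A B P / (orient A B P - orient A B Q)), (orient P Q A / (orient P Q A - orient P Q B)).
have n1 : orient A B P - orient A B Q != 0.
  apply/eqP => e; have E : orient A B P = orient A B Q by lra.
  by move: h2; rewrite E -expr2 ltNge sqr_ge0.
have n2 : orient P Q A - orient P Q B != 0.
  apply/eqP => e; have E : orient P Q A = orient P Q B by lra.
  by move: h1; rewrite E -expr2 ltNge sqr_ge0.
split; [exact: ratio01|exact: ratio01| |].
  move: n1 n2; rewrite /orient => n1 n2; field; by rewrite n1 n2.
move: n1 n2; rewrite /orient => n1 n2; field; by rewrite n1 n2.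
Qed.

Lemma orient_aff (A B P Q X : point R) (t : R) :
  X.1 = (1 - t) * P.1 + t * Q.1 -> X.2 = (1 - t) * P.2 + t * Q.2 ->
  orient A B X = (1 - t) * orient A B P + t * orient A B Q.
Proof. by move=> e1 e2; rewrite /orient e1 e2; ring. Qed.

Variable n : nat.
Variable p : 'I_n -> point R.
Hypothesis gp : general_position p.
Hypothesis conv : convex_position p.

Lemma sum3 (a b c : 'I_n) (A B C : R) (F : 'I_n -> R) :
  a != b -> b != c -> a != c ->
  \sum_j (if j == a then A else if j == b then B else if j == c then C else 0) * F j
  = A * F a + B * F b + C * F c.
Proof.
move=> ab bc ac.
have ba : b != a by rewrite eq_sym.
have cb : c != b by rewrite eq_sym.
have ca : c != a by rewrite eq_sym.
rewrite (bigD1 a) // (bigD1 b) //= ?ba // (bigD1 c) /=; last by rewrite ca cb.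
rewrite !eqxx !(negbTE ab, negbTE ba, negbTE bc, negbTE cb, negbTE ac, negbTE ca).
rewrite big1 ?addr0 ?addrA //.
move=> j /andP [/andP [ja jb] jc].
by rewrite (negbTE jc) (negbTE jb) (negbTE ja) mul0r.
Qed.

Lemma not_inside (a b c x : 'I_n) :
  a != b -> b != c -> a != c -> x != a -> x != b -> x != c ->
  0 < orient (p a) (p b) (p x) -> 0 < orient (p b) (p c) (p x) ->
  0 < orient (p c) (p a) (p x) -> False.
Proof.
move=> ab bc ac xa xb xc h1 h2 h3.
set D := orient (p a) (p b) (p c).
have eD : D = orient (p a) (p b) (p x) + orient (p b) (p c) (p x) + orient (p c) (p a) (p x).
  by rewrite /D /orient; ring.
have hD : 0 < D by lra.
have nD : D != 0 by rewrite gt_eqF.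
have hc : ~ in_hull_of_others p x (p x) := @conv x.
apply: hc.
exists (fun j => if j == a then orient (p b) (p c) (p x) / D else
                 if j == b then orient (p c) (p a) (p x) / D else
                 if j == c then orient (p a) (p b) (p x) / D else 0).
split.
- move=> j; case: ifP => _; first by apply: divr_ge0; lra.
  case: ifP => _; first by apply: divr_ge0; lra.
  case: ifP => _; first by apply: divr_ge0; lra.
  done.
- by rewrite (negbTE xa) (negbTE xb) (negbTE xc).
- have := sum3 (orient (p b) (p c) (p x) / D) (orient (p c) (p a) (p x) / D)
     (orient (p a) (p b) (p x) / D) (fun _ => 1) ab bc ac.
  under eq_bigr do rewrite mulr1.
  move=> ->; rewrite !mulr1 -!mulrDl.
  have -> : orient (p b) (p c) (p x) + orient (p c) (p a) (p x) + orient (p a) (p b) (p x) = D by rewrite eD; ring.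
  exact: divff.
- rewrite (sum3 _ _ _ (fun j => (p j).1) ab bc ac).
  move: nD; rewrite /D /orient => nD; field; exact: nD.
- rewrite (sum3 _ _ _ (fun j => (p j).2) ab bc ac).
  move: nD; rewrite /D /orient => nD; field; exact: nD.
Qed.

Lemma not_inside_neg (a b c x : 'I_n) :
  a != b -> b != c -> a != c -> x != a -> x != b -> x != c ->
  orient (p a) (p b) (p x) < 0 -> orient (p b) (p c) (p x) < 0 ->
  orient (p c) (p a) (p x) < 0 -> False.
Proof.
move=> ab bc ac xa xb xc h1 h2 h3.
have cb : c != b by rewrite eq_sym.
apply: (@not_inside a c b x ac cb ab xa xc xb).
- by rewrite orient_swap; lra.
- by rewrite orient_swap; lra.
- by rewrite orient_swap; lra.
Qed.

Definition crosses (P Q A B : point R) :=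
  (orient P Q A * orient P Q B < 0) /\ (orient A B P * orient A B Q < 0).

Lemma four_pts (a b c d : 'I_n) :
  a != b -> a != c -> a != d -> b != c -> b != d -> c != d ->
  crosses (p a) (p b) (p c) (p d) \/ crosses (p a) (p c) (p b) (p d) \/
  crosses (p a) (p d) (p b) (p c).
Proof.
move=> ab ac ad bc bd cd.
have ba : b != a by rewrite eq_sym.
have ca : c != a by rewrite eq_sym.
have da : d != a by rewrite eq_sym.
have cb : c != b by rewrite eq_sym.
have db : d != b by rewrite eq_sym.
have dc : d != c by rewrite eq_sym.
have n1 := gp ab bc ac. have n2 := gp ab bd ad. have n3 := gp ac cd ad. have n4 := gp bc cd bd.
set x1 := orient (p a) (p b) (p c) in n1 *.
set x2 := orient (p a) (p b) (p d) in n2 *.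
set x3 := orient (p a) (p c) (p d) in n3 *.
set x4 := orient (p b) (p c) (p d) in n4 *.
have e : x1 - x2 + x3 - x4 = 0 by rewrite /x1 /x2 /x3 /x4 /orient; ring.
have := signs4 n1 n2 n3 n4 e.
rewrite /crosses.
have -> : orient (p c) (p d) (p a) = x3 by rewrite /x3 /orient; ring.
have -> : orient (p c) (p d) (p b) = x4 by rewrite /x4 /orient; ring.
have -> : orient (p a) (p c) (p b) = - x1 by rewrite /x1 /orient; ring.
have -> : orient (p b) (p d) (p a) = x2 by rewrite /x2 /orient; ring.
have -> : orient (p b) (p d) (p c) = - x4 by rewrite /x4 /orient; ring.
have -> : orient (p a) (p d) (p b) = - x2 by rewrite /x2 /orient; ring.
have -> : orient (p a) (p d) (p c) = - x3 by rewrite /x3 /orient; ring.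
have -> : orient (p b) (p c) (p a) = x1 by rewrite /x1 /orient; ring.
case=> [[/opp_mul h /opp_mul h']|]; first by left.
case=> [[/opp_mul h /opp_mul h']|]; first by right; left.
case=> [[/opp_mul h /opp_mul h']|]; first by right; right.
have e1 : orient (p c) (p a) (p d) = - x3 by rewrite /x3 /orient; ring.
have e2 : orient (p b) (p d) (p c) = - x4 by rewrite /x4 /orient; ring.
have e3 : orient (p d) (p a) (p c) = x3 by rewrite /x3 /orient; ring.
have e4 : orient (p a) (p c) (p b) = - x1 by rewrite /x1 /orient; ring.
have e5 : orient (p c) (p d) (p b) = x4 by rewrite /x4 /orient; ring.
have e6 : orient (p d) (p a) (p b) = x2 by rewrite /x2 /orient; ring.
have e7 : orient (p b) (p c) (p a) = x1 by rewrite /x1 /orient; ring.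
have e8 : orient (p c) (p d) (p a) = x3 by rewrite /x3 /orient; ring.
have e9 : orient (p d) (p b) (p a) = - x2 by rewrite /x2 /orient; ring.
case=> [[h1 [h2 h3]]|]; first by exfalso; apply: (@not_inside a b c d) => //; rewrite ?e1.
case=> [[h1 [h2 h3]]|]; first by exfalso; apply: (@not_inside_neg a b c d) => //; rewrite ?e1.
case=> [[h1 [h2 h3]]|]; first by exfalso; apply: (@not_inside a b d c) => //; rewrite ?e2 ?e3.
case=> [[h1 [h2 h3]]|]; first by exfalso; apply: (@not_inside_neg a b d c) => //; rewrite ?e2 ?e3.
case=> [[h1 [h2 h3]]|]; first by exfalso; apply: (@not_inside a c d b) => //; rewrite ?e4 ?e5 ?e6.
case=> [[h1 [h2 h3]]|]; first by exfalso; apply: (@not_inside_neg a c d b) => //; rewrite ?e4 ?e5 ?e6.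
case=> [[h1 [h2 h3]]|]; first by exfalso; apply: (@not_inside b c d a) => //; rewrite ?e7 ?e8 ?e9.
case=> [h1 [h2 h3]]; by exfalso; apply: (@not_inside_neg b c d a) => //; rewrite ?e7 ?e8 ?e9.
Qed.

End Geo.

Section Seg.
Variable R : realType.
Variable n : nat.
Variable p : 'I_n -> point R.
Hypothesis gp : general_position p.
Hypothesis conv : convex_position p.

Lemma on_seg_end (s : segment n) k : k \in val s -> on_segment p s (p k).
Proof.
move=> hk; exists k, k, 0; split => //; first by rewrite lexx ler01.
  by rewrite subr0 mul1r mul0r addr0.
by rewrite subr0 mul1r mul0r addr0.
Qed.

Lemma meet_common (s t : segment n) k : k \in val s -> k \in val t -> ~~ disj_adj p s t.
Proof.
move=> hs ht; apply/negP => /asboolP H; apply: H; exists (p k); split; exact: on_seg_end.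
Qed.

Lemma disj_sym (s t : segment n) : disj_adj p s t = disj_adj p t s.
Proof.
apply/idP/idP => /asboolP H; apply/asboolP => [[x [h1 h2]]]; apply: H; exists x; split => //.
Qed.

Lemma cross_meet (s t : segment n) a b c d : val s = [set a; b] -> val t = [set c; d] ->
  crosses (p a) (p b) (p c) (p d) -> ~~ disj_adj p s t.
Proof.
move=> hs ht [h1 h2].
have [t0 [s0 [ht0 hs0 e1 e2]]] := cross_pt h1 h2.
apply/negP => /asboolP H; apply: H.
exists ((1 - t0) * (p a).1 + t0 * (p b).1, (1 - t0) * (p a).2 + t0 * (p b).2); split.
  by exists a, b, t0; rewrite hs set21 set22.
by exists c, d, s0; rewrite ht set21 set22 /= e1 e2.
Qed.

Lemma hull_disj (u v : 'I_n) (s t : segment n) : val s = [set u; v] ->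
  (forall k, k != u -> k != v -> 0 < orient (p u) (p v) (p k)) ->
  u \notin val t -> v \notin val t -> disj_adj p s t.
Proof.
move=> hs hk hu hv; apply/asboolP => [[X [[i [j [t0 [hi hj ht e1 e2]]]] [i' [j' [t1 [hi' hj' ht1 e1' e2']]]]]]].
have z : forall k, k \in val s -> orient (p u) (p v) (p k) = 0.
  by move=> k; rewrite hs => /set2P [] ->; rewrite /orient; ring.
have pos : forall k, k \in val t -> 0 < orient (p u) (p v) (p k).
  move=> k kt; apply: hk; apply/negP => /eqP ek; [move: hu | move: hv]; by rewrite -ek kt.
have E0 := orient_aff (p u) (p v) e1 e2.
have E1 := orient_aff (p u) (p v) e1' e2'.
rewrite (z _ hi) (z _ hj) !mulr0 addr0 in E0.
have A := pos _ hi'; have B := pos _ hj'.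
move: ht1 => /andP [t1a t1b].
have : 0 < (1 - t1) * orient (p u) (p v) (p i') + t1 * orient (p u) (p v) (p j').
  have [t1l|t1e] := ltrP t1 1.
    have : 0 < (1 - t1) * orient (p u) (p v) (p i') by apply: mulr_gt0; lra.
    have : 0 <= t1 * orient (p u) (p v) (p j') by apply: mulr_ge0; lra.
    lra.
  have -> : t1 = 1 by lra.
  by rewrite subrr mul0r add0r mul1r.
by rewrite -E1 E0 ltxx.
Qed.

End Seg.

Lemma seq_min (T : eqType) (le : rel T) (x : T) (s : seq T) :
  (forall a b, le a b || le b a) -> (forall a b c, le a b -> le b c -> le a c) ->
  exists2 m, m \in x :: s & forall y, y \in x :: s -> le m y.
Proof.
move=> tot tr; elim: s x => [|y s IH] x.
  by exists x; rewrite ?mem_seq1 // => z; rewrite mem_seq1 => /eqP ->; have := tot x x; rewrite orbb.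
have [m hm hmin] := IH y.
have [lxm|lmx] := boolP (le x m).
  exists x; first exact: mem_head.
  move=> z; rewrite in_cons => /orP [/eqP ->|hz]; first by have := tot x x; rewrite orbb.
  exact: tr lxm (hmin z hz).
exists m; first by rewrite in_cons hm orbT.
have lmx' : le m x by have := tot x m; rewrite (negbTE lmx).
by move=> z; rewrite in_cons => /orP [/eqP ->|hz] //; apply: hmin.
Qed.

Section Ang.
Variable R : realType.
Variable n : nat.
Variable p : 'I_n -> point R.
Hypothesis gp : general_position p.
Hypothesis conv : convex_position p.
Hypothesis pinj : injective p.

Definition lexle (P Q : point R) := (P.1 < Q.1) || ((P.1 == Q.1) && (P.2 <= Q.2)).

Lemma lexmin (i0 : 'I_n) : exists o, forall j, j != o ->
  (p o).1 < (p j).1 \/ ((p o).1 = (p j).1 /\ (p o).2 < (p j).2).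
Proof.
have tot : forall a b : 'I_n, lexle (p a) (p b) || lexle (p b) (p a).
  move=> a b; rewrite /lexle.
  case: (ltrgtP (p a).1 (p b).1) => //= _; exact: le_total.
have tr : forall a b c : 'I_n, lexle (p a) (p b) -> lexle (p b) (p c) -> lexle (p a) (p c).
  move=> a b c; rewrite /lexle => /orP [h1|/andP [/eqP h1 h1']] /orP [h2|/andP [/eqP h2 h2']].
  - by rewrite (lt_trans h1 h2).
  - by rewrite -h2 h1.
  - by rewrite h1 h2.
  - by rewrite h1 h2 eqxx (le_trans h1' h2') orbT.
have [o _ ho] := seq_min i0 (enum 'I_n) tot tr.
exists o => j jo.
have := ho j; rewrite in_cons mem_enum orbT => /(_ isT).
rewrite /lexle => /orP [h|/andP [/eqP h1 h2]]; first by left.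
right; split => //.
rewrite lt_neqAle h2 andbT; apply/negP => /eqP h3.
move: jo; rewrite eq_sym => /negP; apply; apply/eqP; apply: pinj.
by case: (p o) (p j) h1 h3 => a b [c d] /= -> ->.
Qed.

Variable o : 'I_n.
Hypothesis ho : forall j, j != o ->
  (p o).1 < (p j).1 \/ ((p o).1 = (p j).1 /\ (p o).2 < (p j).2).

Lemma orient_swap23 (a b c : point R) : orient a b c = - orient a c b.
Proof. rewrite /orient; ring. Qed.

Definition alt (j k : 'I_n) := 0 < orient (p o) (p j) (p k).

Lemma alt_irr j : ~~ alt j j.
Proof. by rewrite /alt /orient mulrC subrr ltxx. Qed.

Lemma alt_o j : ~~ alt o j.
Proof. by rewrite /alt /orient !subrr !mul0r subrr ltxx. Qed.

Lemma alt_asym j k : alt j k -> ~~ alt k j.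
Proof. by rewrite /alt (orient_swap23 (p o) (p k)) oppr_gt0 -leNgt => /ltW. Qed.

Lemma alt_total j k : j != o -> k != o -> j != k -> alt j k || alt k j.
Proof.
move=> jo ko jk.
have := @gp o j k ltac:(by rewrite eq_sym) jk ltac:(by rewrite eq_sym).
by rewrite /alt (orient_swap23 (p o) (p k)) neq_lt oppr_gt0 orbC.
Qed.

Lemma alt_trans j k l : j != o -> k != o -> l != o -> j != l ->
  alt j k -> alt k l -> alt j l.
Proof.
move=> jo ko lo jl; rewrite /alt /orient.
have hj := ho jo; have hk := ho ko; have hl := ho lo.
set U1 := (p j).1 - (p o).1; set U2 := (p j).2 - (p o).2.
set V1 := (p k).1 - (p o).1; set V2 := (p k).2 - (p o).2.
set W1 := (p l).1 - (p o).1; set W2 := (p l).2 - (p o).2.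
have nz : U1 * W2 - U2 * W1 != 0.
  have := @gp o j l ltac:(by rewrite eq_sym) jl ltac:(by rewrite eq_sym).
  by rewrite /orient.
have U1p : 0 <= U1 by rewrite /U1; case: hj => [|[]]; lra.
have W1p : 0 <= W1 by rewrite /W1; case: hl => [|[]]; lra.
move=> h1 h2.
have [V1p|V1z] : 0 < V1 \/ (V1 = 0 /\ 0 < V2) by rewrite /V1 /V2; case: hk => [|[]]; lra.
  have id : (U1 * V2 - U2 * V1) * W1 + (V1 * W2 - V2 * W1) * U1 = (U1 * W2 - U2 * W1) * V1.
    by ring.
  have a1 : 0 <= (U1 * V2 - U2 * V1) * W1 by apply: mulr_ge0; lra.
  have a2 : 0 <= (V1 * W2 - V2 * W1) * U1 by apply: mulr_ge0; lra.
  move: nz; rewrite neq_lt => /orP [neg|//].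
  have : (U1 * W2 - U2 * W1) * V1 < 0 by rewrite pmulr_llt0.
  lra.
case: V1z => V1z V2p.
move: h2; rewrite V1z mul0r sub0r oppr_gt0 => h2.
have : 0 <= V2 * W1 by apply: mulr_ge0; lra.
lra.
Qed.

Definition rk (j : 'I_n) := #|[set k | alt k j]|.

Lemma rk_lt j k : j != o -> k != o -> j != k -> alt j k -> (rk j < rk k)%N.
Proof.
move=> jo ko jk hjk; apply: proper_card; apply/properP; split.
  apply/subsetP => l; rewrite !inE => hl.
  have lo : l != o by apply: contraTneq hl => ->; exact: alt_o.
  have lk : l != k by apply: contraTneq hl => ->; exact: alt_asym.
  exact: (alt_trans lo jo ko lk hl hjk).
by exists j; rewrite !inE // alt_irr.
Qed.

Lemma rk_inj j k : j != o -> k != o -> rk j = rk k -> j = k.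
Proof.
move=> jo ko e; apply/eqP; apply/negPn/negP => jk.
case/orP: (alt_total jo ko jk) => h.
  by have := rk_lt jo ko jk h; rewrite e ltnn.
have kj : k != j by rewrite eq_sym.
by have := rk_lt ko jo kj h; rewrite e ltnn.
Qed.

End Ang.

Section Hull.
Variable R : realType.
Variable n : nat.
Variable p : 'I_n -> point R.
Hypothesis gp : general_position p.
Hypothesis conv : convex_position p.
Variable o : 'I_n.
Hypothesis ho : forall j, j != o ->
  (p o).1 < (p j).1 \/ ((p o).1 = (p j).1 /\ (p o).2 < (p j).2).

Local Notation alt := (alt p o).
Local Notation rk := (rk p o).

Lemma rk_bound j : j != o -> (rk j < n.-1)%N.
Proof.
move=> jo.
have sub : [set k | alt k j] \subset ~: [set o; j].
  apply/subsetP => k; rewrite !inE => h; apply/negP => /orP [] /eqP e; move: h; rewrite e.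
    by rewrite (negbTE (alt_o _ _ _)).
  by rewrite (negbTE (alt_irr _ _ _)).
have := subset_leq_card sub.
have := cardsC [set o; j]; rewrite cards2 eq_sym jo card_ord.
rewrite /rk; lia.
Qed.

Lemma rk_surj r : (r < n.-1)%N -> exists j, j != o /\ rk j = r.
Proof.
move=> hr.
set s1 := map rk (enum [set~ o]).
have u1 : uniq s1.
  rewrite map_inj_in_uniq ?enum_uniq // => j k; rewrite !mem_enum !in_setC1 => jo ko.
  exact: (rk_inj gp ho).
have sub : {subset s1 <= iota 0 n.-1}.
  move=> x /mapP [j]; rewrite mem_enum in_setC1 => jo ->.
  by rewrite mem_iota add0n (rk_bound jo).
have sz : (size (iota 0 n.-1) <= size s1)%N.
  by rewrite size_iota size_map -cardE cardsC1 card_ord.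
have [_ eq] := uniq_min_size u1 sub sz.
have : r \in s1 by rewrite eq mem_iota add0n.
by case/mapP => j; rewrite mem_enum in_setC1 => jo ->; exists j.
Qed.

Lemma hull_first q0 : q0 != o -> rk q0 = 0%N ->
  forall l, l != o -> l != q0 -> 0 < orient (p o) (p q0) (p l).
Proof.
move=> qo r0 l lo lq.
have := alt_total gp lo qo lq; case/orP => // h.
by have := rk_lt gp ho lo qo lq h; rewrite r0.
Qed.

Lemma hull_consec j l : j != o -> l != o -> rk l = (rk j).+1 ->
  forall k, k != j -> k != l -> 0 < orient (p j) (p l) (p k).
Proof.
move=> jo lo e k kj kl.
have jl : j != l by apply/eqP => ejl; move: e; rewrite ejl; lia.
have ajl : alt j l.
  case/orP: (alt_total gp jo lo jl) => // h.
  have lj : l != j by rewrite eq_sym.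
  by have := rk_lt gp ho lo jo lj h; rewrite e ltnNge leqnSn.
have [-> | ko] := eqVneq k o.
  by rewrite -orient_cyc.
have nz := @gp j l k jl ltac:(by rewrite eq_sym) ltac:(by rewrite eq_sym).
move: nz; rewrite neq_lt => /orP [neg|//]; exfalso.
have jk : j != k by rewrite eq_sym.
have lk : l != k by rewrite eq_sym.
case/orP: (alt_total gp ko jo kj) => h.
  (* k before j: j inside triangle o k l *)
  apply: (@not_inside R n p conv o k l j) => //; try (by rewrite eq_sym).
  - by rewrite -orient_cyc orient_swap23; lra.
  - by rewrite orient_cyc.
have hl : alt l k.
  case/orP: (alt_total gp lo ko lk) => // h'.
  have := rk_lt gp ho jo ko jk h; have := rk_lt gp ho ko lo kl h'; rewrite e; lia.
apply: (@not_inside R n p conv o j k l) => //; try (by rewrite eq_sym).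
- by rewrite orient_swap23; lra.
- by rewrite orient_cyc.
Qed.

End Hull.

Lemma five_hull (R : realType) n (p : 'I_n -> point R) :
  general_position p -> convex_position p -> injective p -> (10 <= n)%N ->
  exists v : nat -> 'I_n,
  (forall i j, (i < 10)%N -> (j < 10)%N -> v i = v j -> i = j) /\
  (forall k, (k < 5)%N -> forall l, l != v (2 * k)%N -> l != v (2 * k + 1)%N ->
     0 < orient (p (v (2 * k)%N)) (p (v (2 * k + 1)%N)) (p l)).
Proof.
move=> gp conv pinj hn.
have n0 : (0 < n)%N by lia.
have [o ho] := lexmin pinj (Ordinal n0).
pose q r := odflt o [pick j | (j != o) && (rk p o j == r)].
have hq : forall r, (r < n.-1)%N -> q r != o /\ rk p o (q r) = r.
  move=> r hr; rewrite /q; case: pickP => [j /andP [jo /eqP ->] //|].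
  have [j [jo e]] := rk_surj gp ho hr.
  by move=> /(_ j); rewrite jo e eqxx.
pose v i := if i is i'.+1 then q i' else o.
exists v; split.
  move=> [|i] [|j] hi hj //=.
  - by have [h _] := hq j ltac:(lia); move=> e; move: h; rewrite -e eqxx.
  - by have [h _] := hq i ltac:(lia); move=> e; move: h; rewrite e eqxx.
  - move=> e; have [_ e1] := hq i ltac:(lia); have [_ e2] := hq j ltac:(lia).
    by congr S; rewrite -e1 -e2 e.
move=> [|k] hk l.
  rewrite /= => lo lq.
  have [q0 r0] := hq 0%N ltac:(lia).
  exact: hull_first.
have -> : (2 * k.+1 = (2 * k + 1).+1)%N by lia.
have -> : ((2 * k + 1).+1 + 1 = (2 * k + 2).+1)%N by lia.
rewrite /= => l1 l2.
have [o1 r1] := hq (2 * k + 1)%N ltac:(lia).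
have [o2 r2] := hq (2 * k + 2)%N ltac:(lia).
apply: (hull_consec gp conv ho o1 o2) => //.
by rewrite r1 r2; lia.
Qed.

Lemma seg_card n (i j : 'I_n) : i != j -> #|[set i; j]| == 2.
Proof. by move=> h; rewrite cards2 h. Qed.

Definition seg n (i j : 'I_n) (h : i != j) : segment n :=
  exist (fun s : {set 'I_n} => #|s| == 2) [set i; j] (seg_card h).

Lemma set2_eq n (s t a b : 'I_n) : [set s; t] = [set a; b] -> s != t ->
  (s == a) && (t == b) || (s == b) && (t == a).
Proof.
move=> e st.
have hs : s \in [set a; b] by rewrite -e set21.
have ht : t \in [set a; b] by rewrite -e set22.
move: hs ht st; rewrite !inE => /orP [] /eqP -> /orP [] /eqP ->; rewrite ?eqxx //= ?orbT //.
Qed.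

Section Main.
Variable R : realType.
Variable n : nat.
Variable p : 'I_n -> point R.
Hypothesis gp : general_position p.
Hypothesis conv : convex_position p.
Variable v : nat -> 'I_n.
Hypothesis vinj : forall i j, (i < 10)%N -> (j < 10)%N -> v i = v j -> i = j.
Hypothesis vhull : forall k, (k < 5)%N -> forall l, l != v (2 * k)%N -> l != v (2 * k + 1)%N ->
     0 < orient (p (v (2 * k)%N)) (p (v (2 * k + 1)%N)) (p l).

Local Notation adj := (disj_adj p).

Lemma hne (k : 'I_5) : v (2 * k)%N != v (2 * k + 1)%N.
Proof. apply/eqP => /vinj; have := ltn_ord k; lia. Qed.

Definition hs (k : 'I_5) : segment n := seg (hne k).

Lemma avoid (S : {set 'I_n}) : (#|S| <= 4)%N ->
  exists k : 'I_5, (v (2 * k)%N \notin S) && (v (2 * k + 1)%N \notin S).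
Proof.
move=> hS; case: (boolP [exists k : 'I_5, (v (2 * k)%N \notin S) && (v (2 * k + 1)%N \notin S)]) => [/existsP //|].
rewrite negb_exists => /forallP H; exfalso.
pose g (k : 'I_5) := if v (2 * k)%N \in S then v (2 * k)%N else v (2 * k + 1)%N.
have gS : forall k, g k \in S.
  move=> k; rewrite /g; case: ifP => // h; have := H k; rewrite h /= negbK; done.
have ginj : injective g.
  move=> k k'; have := ltn_ord k; have := ltn_ord k'.
  rewrite /g; case: ifP => _; case: ifP => _ h1 h2 /vinj e; apply/val_inj => /=;
    (have := e ltac:(lia) ltac:(lia)); lia.
have : (#|[set g k | k in 'I_5]| <= #|S|)%N.
  by apply: subset_leq_card; apply/subsetP => x /imsetP [k _ ->].
by rewrite card_imset // card_ord; lia.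
Qed.

Lemma hs_adj (k : 'I_5) (t : segment n) :
  v (2 * k)%N \notin val t -> v (2 * k + 1)%N \notin val t -> adj (hs k) t.
Proof.
move=> h1 h2; apply: (hull_disj (u := v (2 * k)%N) (v := v (2 * k + 1)%N)) => //.
by move=> l; apply: vhull.
Qed.

Lemma common_nb (x y : segment n) :
  exists k : 'I_5, adj x (hs k) && adj (hs k) y.
Proof.
have hS : (#|val x :|: val y| <= 4)%N.
  rewrite cardsU (eqP (valP x)) (eqP (valP y)); lia.
have [k /andP [h1 h2]] := avoid hS.
exists k; rewrite disj_sym; apply/andP; split; apply: hs_adj;
  by [apply: contra h1 => h; rewrite inE h ?orbT | apply: contra h2 => h; rewrite inE h ?orbT].
Qed.

Lemma walk_short (x y : segment n) s : walk adj x y s -> x != y -> ~~ adj x y -> (2 <= size s)%N.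
Proof.
move=> w xy na; case: s w => [|a [|b s]] //=; rewrite /walk /=.
  by move=> /eqP e; rewrite e eqxx in xy.
by rewrite andbT => /andP [h /eqP e]; rewrite -e h in na.
Qed.

Definition W0 := [set hs k | k : 'I_5].

Lemma lower_mv : mv_set adj (~: W0).
Proof.
move=> x y hx hy xy.
have [a|na] := boolP (adj x y).
  exists [:: y]; split; last by [].
  split; first by rewrite /walk /= a eqxx.
  by move=> [|b s] //; rewrite /walk /= => /eqP e; move: xy; rewrite e eqxx.
have [k /andP [h1 h2]] := common_nb x y.
exists [:: hs k; y]; split.
  split; first by rewrite /walk /= h1 h2 eqxx.
  move=> s' w; exact: walk_short w xy na.
by rewrite /internal /= andbT in_setC negbK /W0 imset_f.
Qed.

Lemma card_seg : #|{: segment n}| = 'C(n, 2).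
Proof. by rewrite card_sig -[in RHS](card_ord n) -card_draws; apply: eq_card => s; rewrite !inE. Qed.

Lemma lower_card : ('C(n, 2) - 5 <= #|~: W0|)%N.
Proof.
have := cardsC W0; rewrite card_seg.
have : (#|W0| <= 5)%N by rewrite (leq_trans (leq_imset_card _ _)) // card_ord.
lia.
Qed.


Lemma hasLE {T} (a : T -> bool) s : hasL a s = has a s.
Proof. by elim: s => //= x s IH; case: (a x). Qed.
Lemma allLE {T} (a : T -> bool) s : allL a s = all a s.
Proof. by elim: s => //= x s IH; case: (a x). Qed.

Lemma inWi_sem E s t i : inWi E s t i = (E s (2*i)%N && E t (2*i+1)%N) || (E s (2*i+1)%N && E t (2*i)%N).
Proof. by []. Qed.

Lemma check_wit E : check E -> (exists d u v, vA E d u v) \/ (exists a b c d, vB E a b c d).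
Proof.
rewrite /check; case: ifP => [hB _|_ hA].
  right; move: hB; rewrite /checkB.
  move=> /hasLP [h0 /hasLP [h1 /hasLP [h2 /hasLP [h3 ht]]]].
  by exists (nth 0 (candB E h0 h1 h2 h3) 0), (nth 0 (candB E h0 h1 h2 h3) 1),
     (nth 0 (candB E h0 h1 h2 h3) 2), (nth 0 (candB E h0 h1 h2 h3) 3).
left; move: hA; rewrite /checkA => /hasLP [d /hasLP [u /hasLP [w hw]]].
by exists d, u, w.
Qed.

Lemma vA_sem E d u w : vA E d u w ->
  [/\ ~~ E d u, ~~ E d w, ~~ E u w, ~~ inW E d u && ~~ inW E d w & cov E [:: d; u; w]].
Proof.
rewrite /vA /nE; by case: (E d u); case: (E d w); case: (E u w); case: (inW E d u); case: (inW E d w).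
Qed.

Lemma vB_sem E a b c d : vB E a b c d ->
  [/\ ~~ E a b && ~~ E a c && ~~ E a d && ~~ E b c && ~~ E b d && ~~ E c d,
      ~~ inW E a b && ~~ inW E a c && ~~ inW E a d && ~~ inW E b c && ~~ inW E b d && ~~ inW E c d &
      cov E [:: a; b; c; d]].
Proof.
rewrite /vB /= /nE.
by case: (E a b); case: (E a c); case: (E a d); case: (E b c); case: (E b d); case: (E c d) => //=;
   case: (inW E a b); case: (inW E a c); case: (inW E a d); case: (inW E b c); case: (inW E b d);
   case: (inW E c d).
Qed.


Lemma bad_pair (W : {set segment n}) : (#|W| <= 4)%N -> (10 <= n)%N ->
  exists x y : segment n, [/\ x \notin W, y \notin W, x != y, ~~ adj x y &
     forall w, w \in W -> exists2 k, k \in val w & (k \in val x) || (k \in val y)].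
Proof.
move=> hW hn.
have hends : forall s : segment n, exists ab : 'I_n * 'I_n, ab.1 != ab.2 /\ val s = [set ab.1; ab.2].
  by move=> s; have /cards2P [a [b [ab e]]] := valP s; exists (a, b).
have [ends hE] := choice hends.
pose z0 := hs ord0.
pose ws := enum W.
pose w i := nth z0 ws i.
have Wsub : forall x, x \in W -> exists2 i, (i < 4)%N & x = w i.
  move=> x hx; exists (index x ws); last by rewrite /w nth_index // mem_enum.
  by rewrite (leq_trans _ hW) // cardE index_mem mem_enum.
pose A i := (ends (w i)).1; pose B i := (ends (w i)).2.
have hAB : forall i, A i != B i /\ val (w i) = [set A i; B i] := fun i => hE (w i).
pose L := [:: A 0; B 0; A 1; B 1; A 2; B 2; A 3; B 3]%N.
pose V := [set nth (A 0%N) L k | k : 'I_8].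
have hV : (#|V| <= 8)%N by rewrite (leq_trans (leq_imset_card _ _)) // card_ord.
have [f hf] : exists f, f \notin V.
  have : (0 < #|~: V|)%N by have := cardsC V; rewrite card_ord; lia.
  by case/card_gt0P => f; rewrite inE => hf; exists f.
have [g hg] : exists g, (g \notin V) && (g != f).
  have : (0 < #|~: (f |: V)|)%N.
    have := cardsC (f |: V); rewrite card_ord cardsU1; lia.
  by case/card_gt0P => g; rewrite !inE negb_or => /andP [h1 h2]; exists g; rewrite h2 h1.
move/andP: hg => [hg gf].
pose pt k := nth f (L ++ [:: f; g]) k.
have ptA : forall i, (i < 4)%N -> pt (2 * i)%N = A i by case=> [|[|[|[|i]]]].
have ptB : forall i, (i < 4)%N -> pt (2 * i + 1)%N = B i by case=> [|[|[|[|i]]]].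
have inV : forall k, (k < 8)%N -> pt k \in V.
  move=> k hk; have -> : pt k = nth (A 0%N) L (Ordinal hk).
    by rewrite /pt nth_cat /= hk; apply: set_nth_default.
  exact: imset_f.
have hc : check (fun k l => pt k == pt l).
  apply: check_pt.
  - by move=> k hk; rewrite /pt nth_default ?size_cat //.
  - by move=> i hi; rewrite ptA // ptB //; case: (hAB i).
  - have -> : pt 8%N = f by [].
    by move=> k hk; apply: contraNneq hf => <-; apply: inV.
  - have -> : pt 9%N = g by [].
    move=> k; rewrite ltnS leq_eqVlt => /orP [/eqP ->|hk]; first by rewrite eq_sym.
    by apply: contraNneq hg => <-; apply: inV.
set E := (fun k l => pt k == pt l) in hc.
have notW : forall s t (h : pt s != pt t), ~~ inW E s t -> seg h \notin W.
  move=> s t h nW; apply/negP => /Wsub [i hi e].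
  have [_ ev] := hAB i.
  have e2 : [set pt s; pt t] = [set A i; B i] by rewrite -ev -e.
  have := set2_eq e2 h.
  move: nW; rewrite /inW hasLE => /hasPn /(_ i); rewrite mem_iota add0n => /(_ hi).
  by rewrite inWi_sem /E ptA // ptB // => /negbTE ->.
have covW : forall S, cov E S -> forall x, x \in W -> exists2 k, k \in val x & k \in [seq pt s | s <- S].
  move=> S hS x /Wsub [i hi ->].
  move: hS; rewrite /cov allLE => /allP /(_ i); rewrite mem_iota add0n => /(_ hi).
  rewrite /covi hasLE => /hasP [s sS]; rewrite /E ptA // ptB //.
  have [_ ->] := hAB i.
  move=> /orP [] /eqP e; exists (pt s);
    [by rewrite e !inE eqxx | exact: map_f | by rewrite e !inE eqxx orbT | exact: map_f].
case: (check_wit hc) => [[d [u [x hA]]]|[a [b [c [d hB]]]]].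
  case: (vA_sem hA) => h1 h2 h3 /andP [n1 n2] hcov.
  rewrite /E in h1 h2 h3.
  exists (seg h1), (seg h2); split.
  - exact: notW.
  - exact: notW.
  - apply/negP => /eqP /(congr1 val) /= e.
    have : pt u \in [set pt d; pt x] by rewrite -e set22.
    by rewrite !inE (negbTE h3) eq_sym (negbTE h1).
  - by apply: (@meet_common R n p (seg h1) (seg h2) (pt d)); rewrite /= set21.
  move=> y /(covW _ hcov) [k hk]; rewrite /= !inE => hk'.
  exists k => //; rewrite !inE.
  by move: hk'; case: (k == pt d); case: (k == pt u); case: (k == pt x).
case: (vB_sem hB) => /andP [/andP [/andP [/andP [/andP [d1 d2] d3] d4] d5] d6].
move=> /andP [/andP [/andP [/andP [/andP [m1 m2] m3] m4] m5] m6] hcov.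
rewrite /E in d1 d2 d3 d4 d5 d6.
have pairing : forall i j k l (hij : pt i != pt j) (hkl : pt k != pt l),
    ~~ inW E i j -> ~~ inW E k l -> pt i != pt k -> pt i != pt l ->
    crosses (p (pt i)) (p (pt j)) (p (pt k)) (p (pt l)) ->
    (forall y, y \in W -> exists2 m, m \in val y & m \in [set pt i; pt j; pt k; pt l]) ->
    exists x y : segment n, [/\ x \notin W, y \notin W, x != y, ~~ adj x y &
     forall w, w \in W -> exists2 k, k \in val w & (k \in val x) || (k \in val y)].
  move=> i j k l hij hkl ni nk ik il cr cv.
  exists (seg hij), (seg hkl); split.
  - exact: notW.
  - exact: notW.
  - apply/negP => /eqP /(congr1 val) /= e.
    have : pt i \in [set pt k; pt l] by rewrite -e set21.
    by rewrite !inE (negbTE ik) (negbTE il).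
  - exact: (@cross_meet R n p (seg hij) (seg hkl) (pt i) (pt j) (pt k) (pt l)).
  move=> y /cv [m hm]; rewrite !inE => hm'.
  exists m => //; rewrite !inE.
  by move: hm'; case: (m == pt i); case: (m == pt j); case: (m == pt k); case: (m == pt l).
have cv4 : forall y, y \in W -> exists2 m, m \in val y & m \in [:: pt a; pt b; pt c; pt d].
  by move=> y /(covW _ hcov) [m hm hm']; exists m.
case: (four_pts gp conv d1 d2 d3 d4 d5 d6) => [cr|[cr|cr]].
- apply: (pairing a b c d d1 d6 m1 m6 d2 d3 cr).
  move=> y /cv4 [m hm]; rewrite !inE => hm'; exists m => //; rewrite !inE.
  by move: hm'; case: (m == pt a); case: (m == pt b); case: (m == pt c); case: (m == pt d).
- apply: (pairing a c b d d2 d5 m2 m5 d1 d3 cr).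
  move=> y /cv4 [m hm]; rewrite !inE => hm'; exists m => //; rewrite !inE.
  by move: hm'; case: (m == pt a); case: (m == pt b); case: (m == pt c); case: (m == pt d).
- apply: (pairing a d b c d3 d4 m3 m4 d1 d2 cr).
  move=> y /cv4 [m hm]; rewrite !inE => hm'; exists m => //; rewrite !inE.
  by move: hm'; case: (m == pt a); case: (m == pt b); case: (m == pt c); case: (m == pt d).
Qed.

End Main.

Local Close Scope ring_scope.

Theorem proposition5 (R : realType) (n : nat) (p : 'I_n -> point R) :
  (10 <= n)%N -> injective p ->
  general_position p -> convex_position p ->
  mu (disj_adj p) = ('C(n, 2) - 5)%N.
Proof.
move=> hn pinj gp conv.
have [v [vinj vhull]] := five_hull gp conv pinj hn.
rewrite /mu; apply/eqP; rewrite eqn_leq; apply/andP; split; last first.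
  apply: (bigop.bigmax_sup (~: W0 vinj)); last exact: lower_card.
  by apply/asboolP; exact: lower_mv.
apply/bigop.bigmax_leqP => U /asboolP mv.
rewrite leqNgt; apply/negP => big.
have hW : (#|~: U| <= 4)%N by have := cardsC U; rewrite card_seg; lia.
have [x [y [xW yW xy nadj cov]]] := bad_pair gp conv vinj hW hn.
move: xW yW; rewrite !in_setC !negbK => xU yU.
have [s [[ws smin] sint]] := mv x y xU yU xy.
have [k /andP [h1 h2]] := common_nb vinj vhull x y.
have le2 := smin [:: hs vinj k; y] ltac:(by rewrite /walk /= h1 h2 eqxx).
have ge2 := walk_short ws xy nadj.
clear smin; case: s ws sint le2 ge2 => [|a [|b [|c s]]] //= ws sint _ _.
move: ws; rewrite /walk /= andbT => /andP [/andP [xa ab] /eqP eb].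
move: sint; rewrite /internal /= andbT => aU.
have aW : a \in ~: U by rewrite in_setC.
have [m hm /orP [hx|hy]] := cov a aW.
  by have := @meet_common R n p a x m hm hx; rewrite disj_sym xa.
by have := @meet_common R n p a y m hm hy; rewrite -eb ab.
Qed.
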